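(* Let $\mathcal{G}=(V,E)$ be an unweighted simple directed graph, let $i\in V$, and let $\phi$ be a spanning converging forest chosen uniformly at random from the set $\mathcal{F}$ of all spanning converging forests of $\mathcal{G}$. Then $$\overline{\omega}_{ii}(\phi)=\frac{1}{1+d_i}\Big(1+\sum_{k\in N^-_i}\widehat{\omega}_{ik}(\phi)\Big)$$ is an unbiased estimator of $\omega_{ii}$, its variance is $${\rm Var}(\overline{\omega}_{ii})=\frac{3\omega_{ii}}{1+d_i}-\frac{2}{(1+d_i)^2}-\omega_{ii}^2,$$ and this variance is always less than or equal to the variance of the estimator $\widehat{\omega}_{ii}(\phi)$.
   Context: $\mathcal{G}=(V,E)$ has $n$ nodes; $a_{ij}=1$ if $(i,j)\in E$ and $0$ otherwise. $d_i=\sum_j a_{ij}$ is the out-degree of $i$, $\mathbf{D}=\mathrm{diag}(d_1,\dots,d_n)$, $\mathbf{L}=\mathbf{D}-\mathbf{A}$, and the forest matrix is $\mathbf{\Omega}=(\mathbf{I}+\mathbf{L})^{-1}=(\omega_{ij})$. $N^-_i=\{k:(k,i)\in E\}$ is the set of in-neighbors of $i$. A rooted converging tree is a weakly connected digraph without cycles in which one node (the root) has out-degree $0$ and every other node has out-degree $1$ (an isolated node is such a tree rooted at itself). A spanning converging forest of $\mathcal{G}$ is a spanning subgraph (all of $V$, a subset of $E$) whose weakly connected components are rooted converging trees; $r_\phi(i)$ is the root of the tree of $\phi$ containing $i$. The basic estimator is $\widehat{\omega}_{ij}(\phi)=\mathbb{I}_{\{r_\phi(i)=j\}}$ (1 if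 $r_\phi(i)=j$, else 0). *)

(* Defs.v *)
From HB Require Import structures.
From mathcomp Require Import all_boot all_order all_algebra.
Set Implicit Arguments. Unset Strict Implicit. Unset Printing Implicit Defensive.
Import Order.TTheory GRing.Theory Num.Theory.
Local Open Scope ring_scope.

(* A digraph on nodes 'I_n is given by its adjacency relation e : a_ij = 1 iff e i j.
   "Simple" means no self-loops: e is irreflexive (multi-edges impossible by construction). *)
Definition simple_digraph (n : nat) (e : rel 'I_n) : Prop := forall i, ~~ e i i.

Definition edge_set (n : nat) (e : rel 'I_n) : {set 'I_n * 'I_n} :=
  [set p | e p.1 p.2].

Definition outdeg (n : nat) (e : rel 'I_n) (i : 'I_n) : nat := #|[set j | e i j]|.
Definition in_nbrs (n : nat) (e : rel 'I_n) (i : 'I_n) : {set 'I_n} := [set k | e k i].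

Definition laplacian (R : comUnitRingType) (n : nat) (e : rel 'I_n) : 'M[R]_n :=
  \matrix_(i, j) ((i == j)%:R * (outdeg e i)%:R - (e i j)%:R).
Definition forest_matrix (R : comUnitRingType) (n : nat) (e : rel 'I_n) : 'M[R]_n :=
  invmx (1%:M + laplacian R e).

Definition frel (n : nat) (F : {set 'I_n * 'I_n}) : rel 'I_n := fun a b => (a, b) \in F.

(* Spanning converging forest: a subset F of E in which every node has out-degree
   at most 1 and there is no directed cycle.  (Its weakly connected components are
   then exactly rooted converging trees, the roots being the out-degree-0 nodes.) *)
Definition is_scf (n : nat) (e : rel 'I_n) (F : {set 'I_n * 'I_n}) : bool :=
  [&& F \subset edge_set e,
      [forall x : 'I_n, #|[set y | (x, y) \in F]| <= 1]%N &
      [forall x : 'I_n, forall y : 'I_n, ((x, y) \in F) ==> ~~ connect (frel F) y x]].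

Definition scforests (n : nat) (e : rel 'I_n) : {set {set 'I_n * 'I_n}} :=
  [set F | is_scf e F].

Definition fnext (n : nat) (F : {set 'I_n * 'I_n}) (x : 'I_n) : 'I_n :=
  if [pick y | (x, y) \in F] is Some y then y else x.

(* r_phi(i): the root of the tree containing i (n steps suffice in an acyclic forest) *)
Definition froot (n : nat) (F : {set 'I_n * 'I_n}) (x : 'I_n) : 'I_n :=
  iter n (fnext F) x.

Definition omega_hat (R : ringType) (n : nat) (i j : 'I_n) (F : {set 'I_n * 'I_n}) : R :=
  (froot F i == j)%:R.

Definition omega_bar (R : fieldType) (n : nat) (e : rel 'I_n) (i : 'I_n)
    (F : {set 'I_n * 'I_n}) : R :=
  (1 + (outdeg e i)%:R)^-1 * (1 + \sum_(k in in_nbrs e i) omega_hat R i k F).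

Definition unif_exp (R : fieldType) (n : nat) (e : rel 'I_n)
    (X : {set 'I_n * 'I_n} -> R) : R :=
  (#|scforests e|%:R)^-1 * \sum_(F in scforests e) X F.

Definition unif_var (R : fieldType) (n : nat) (e : rel 'I_n)
    (X : {set 'I_n * 'I_n} -> R) : R :=
  unif_exp e (fun F => (X F - unif_exp e X) ^+ 2).

(* Main.v *)
Require Import Defs.
From HB Require Import structures.
From mathcomp Require Import all_boot all_order all_algebra all_fingroup.
From mathcomp Require Import zify ring lra.
Require Import Defs.
Set Implicit Arguments. Unset Strict Implicit. Unset Printing Implicit Defensive.
Import Order.TTheory GRing.Theory Num.Theory.

Section Comb.
Variable n : nat.
Implicit Types (c : {ffun 'I_n -> option 'I_n}) (x y z a b : 'I_n).

Definition crel c : rel 'I_n := fun a b => c a == Some b.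
Definition acycb c := [forall x, forall y, (c x == Some y) ==> ~~ connect (crel c) y x].

Lemma func_step c a b z : c a = Some b -> connect (crel c) a z -> a != z ->
  connect (crel c) b z.
Proof.
move=> cab /connectP [p pth ->]; case: p pth => [|b' p] /=; first by rewrite eqxx.
case/andP => /eqP cb' pth _.
have eb : b' = b by move: cb'; rewrite cab => -[].
by subst b'; apply/connectP; exists p.
Qed.

Lemma root_connect c a z : c a = None -> connect (crel c) a z -> z = a.
Proof.
move=> ca /connectP [[|b p] /=]; first by move=> _ ->.
by rewrite /crel ca.
Qed.

Definition hgt c x := #|[set z | connect (crel c) x z]|.

Lemma hgt_lt c x y : acycb c -> c x = Some y -> hgt c y < hgt c x.
Proof.
move=> /forallP /(_ x) /forallP /(_ y) ac cxy; rewrite cxy eqxx /= in ac.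
apply: proper_card; apply/properP; split.
  apply/subsetP => z; rewrite !inE => cz; apply: connect_trans cz.
  by apply: connect1; rewrite /crel cxy.
by exists x; rewrite !inE ?connect0.
Qed.

Lemma hgt_connect (h : 'I_n -> nat) c :
  (forall x y, c x = Some y -> h y < h x) ->
  forall x z, connect (crel c) x z -> h z <= h x.
Proof.
move=> hd x z /connectP [p]; elim: p x => [|b p IH] x /=; first by move=> _ ->.
case/andP => /eqP cb pth zl; apply: leq_trans (IH _ pth zl) _.
exact: ltnW (hd _ _ cb).
Qed.

Lemma acyc_of_hgt (h : 'I_n -> nat) c :
  (forall x y, c x = Some y -> h y < h x) -> acycb c.
Proof.
move=> hd; apply/forallP => x; apply/forallP => y; apply/implyP => /eqP cxy.
apply/negP => con; have := hgt_connect hd con; have := hd _ _ cxy.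
by move=> a b; move: (leq_trans a b); rewrite ltnn.
Qed.

Lemma acyc_hgt c : acycb c -> forall x y, c x = Some y -> hgt c y < hgt c x.
Proof. by move=> ac x y; apply: hgt_lt. Qed.

Lemma cycle_back c x y z : c x = Some y -> connect (crel c) y x ->
  connect (crel c) x z -> connect (crel c) z x.
Proof.
move=> cxy cyx /connectP [p pth ->].
suff H : forall a, connect (crel c) a x -> path (crel c) a p ->
    connect (crel c) (last a p) x by apply: H; [exact: connect0|].
elim: p {pth} => [|b p IH] a //= cax /andP [/eqP cab pth].
apply: IH pth; have [ax|ax] := eqVneq a x.
  by move: cab; rewrite ax cxy => -[<-].
exact: func_step cab cax ax.
Qed.

End Comb.

Section Upd.
Variable n : nat.
Implicit Types (c : {ffun 'I_n -> option 'I_n}) (x y z a b i k : 'I_n).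

Definition upd c k (o : option 'I_n) : {ffun 'I_n -> option 'I_n} :=
  [ffun x => if x == k then o else c x].

Lemma acyc_upd c k i : c k = None ->
  acycb (upd c k (Some i)) = acycb c && ~~ connect (crel c) i k.
Proof.
move=> ck.
have sub : subrel (crel c) (crel (upd c k (Some i))).
  move=> a b; rewrite /crel ffunE; case: (eqVneq a k) => [->|_] //; by rewrite ck.
case: (boolP (acycb c)) => /= ac; last first.
  apply/negP => ac2; move: ac; rewrite negb_forall => /existsP [x].
  rewrite negb_forall => /existsP [y]; rewrite negb_imply negbK => /andP [cxy con].
  move/forallP: ac2 => /(_ x) /forallP /(_ y).
  rewrite ffunE; case: (eqVneq x k) => [xk|_]; first by move: cxy; rewrite xk ck.
  rewrite cxy /= (connect_sub (fun a b h => connect1 (sub a b h)) con).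
  by [].
case: (boolP (connect (crel c) i k)) => /= cik.
  apply/negP => /forallP /(_ k) /forallP /(_ i); rewrite ffunE eqxx eqxx /=.
  by rewrite (connect_sub (fun a b h => connect1 (sub a b h)) cik).
pose h x := (hgt c x + (connect (crel c) x k) * (hgt c i).+1)%N.
apply: (acyc_of_hgt (h := h)) => x y; rewrite ffunE.
case: (eqVneq x k) => [-> [<-]|xk cxy].
  rewrite /h (negbTE cik) connect0 /= mul0n addn0 mul1n; exact: ltn_addl (ltnSn _).
have hl := hgt_lt ac cxy.
rewrite /h; case: (boolP (connect (crel c) x k)) => cxk.
  have cyk : connect (crel c) y k by exact: func_step cxy cxk xk.
  by rewrite cyk ltn_add2r.
have -> : connect (crel c) y k = false.
  apply/negbTE; apply: contra cxk; apply: connect_trans; apply: connect1.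
  by rewrite /crel cxy.
by rewrite !mul0n !addn0.
Qed.

End Upd.

Section Forest.
Variable n : nat.
Implicit Types (c : {ffun 'I_n -> option 'I_n}) (x y z a b i k : 'I_n).

Definition Fset c : {set 'I_n * 'I_n} := [set p | c p.1 == Some p.2].
Definition gnext c x := odflt x (c x).

Lemma fnext_Fset c x : fnext (Fset c) x = gnext c x.
Proof.
rewrite /fnext /gnext; case: pickP => [y|]; rewrite ?inE /=.
  by move/eqP => ->.
move=> H; case cx: (c x) => [y|] //; move: (H y); by rewrite inE /= cx eqxx.
Qed.

Lemma froot_Fset c x : froot (Fset c) x = iter n (gnext c) x.
Proof. by rewrite /froot; apply: eq_iter => y; rewrite fnext_Fset. Qed.

Lemma frel_Fset c : frel (Fset c) =2 crel c.
Proof. by move=> a b; rewrite /frel inE. Qed.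

Lemma connect_gnext c x : connect (crel c) x (gnext c x).
Proof.
rewrite /gnext; case cx: (c x) => [y|] /=; last exact: connect0.
by apply: connect1; rewrite /crel cx.
Qed.

Lemma iter_connect c m x : connect (crel c) x (iter m (gnext c) x).
Proof.
elim: m => [|m IH] /=; first exact: connect0.
exact: connect_trans IH (connect_gnext _ _).
Qed.

Lemma iter_fix c k m : c k = None -> iter m (gnext c) k = k.
Proof. by move=> ck; elim: m => //= m ->; rewrite /gnext ck. Qed.

Lemma path_iter c x p : path (crel c) x p -> iter (size p) (gnext c) x = last x p.
Proof.
elim: p x => [|b p IH] x //= /andP [/eqP cxb pth].
by rewrite -iterS iterSr (_ : gnext c x = b) ?IH // /gnext cxb.
Qed.

Lemma connect_iter c x k : c k = None -> connect (crel c) x k ->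
  iter n (gnext c) x = k.
Proof.
move=> ck /connectP [p pth ekp]; subst k.
move: ck; case/shortenP: pth => p' pth' up' _ ck.
have sz : (size p' <= n)%N.
  move/card_uniqP: up' => eqs; apply: ltnW.
  rewrite (_ : (size p').+1 = size (x::p')) // -eqs.
  by apply: leq_trans (max_card _) _; rewrite card_ord.
rewrite -[X in iter X](subnK sz) iterD path_iter // iter_fix //.
Qed.

Lemma hgt_le c x : (0 < hgt c x <= n)%N.
Proof.
apply/andP; split; first by apply/card_gt0P; exists x; rewrite inE connect0.
by apply: leq_trans (max_card _) _; rewrite card_ord.
Qed.

Lemma root_iter c x : acycb c -> c (iter n (gnext c) x) = None.
Proof.
move=> ac; case cn: (c _) => [r|] //; exfalso.
have nr : forall m, (m < n)%N -> exists y, c (iter m (gnext c) x) = Some y.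
  move=> m mn; case cm: (c _) => [y|]; first by exists y.
  by move: cn; rewrite -[X in iter X](subnK (ltnW mn)) iterD (iter_fix _ cm) cm.
have H : forall m, (m <= n)%N -> (hgt c (iter m (gnext c) x) + m <= hgt c x)%N.
  elim=> [|m IH] mn; first by rewrite addn0.
  have [y cy] := nr m mn.
  have := hgt_lt ac cy; rewrite /= {2}/gnext cy /= => lt.
  apply: leq_trans (IH (ltnW mn)); by rewrite addnS ltn_add2r.
have := H n (leqnn n); have /andP [h1 _] := hgt_le c (iter n (gnext c) x).
have /andP [_ h2] := hgt_le c x.
move=> h3; lia.
Qed.

Lemma froot_eq c i k : acycb c ->
  (froot (Fset c) i == k) = (c k == None) && connect (crel c) i k.
Proof.
move=> ac; rewrite froot_Fset; apply/eqP/andP.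
  by move=> <-; split; [rewrite root_iter | exact: iter_connect].
by case=> /eqP ck con; apply: connect_iter.
Qed.


Definition allowed (e : rel 'I_n) c := [forall x, forall y, (c x == Some y) ==> e x y].

Lemma is_scf_Fset e c : is_scf e (Fset c) = allowed e c && acycb c.
Proof.
have E1 : (Fset c \subset edge_set e) = allowed e c.
  apply/subsetP/forallP => [H x|H [x y]].
    apply/forallP => y; apply/implyP => cxy.
    by have := H (x, y); rewrite !inE /=; apply.
  rewrite !inE /= => cxy.
  by move/forallP: (H x) => /(_ y) /implyP; apply.
have E2 : [forall x, #|[set y | (x, y) \in Fset c]| <= 1]%N.
  apply/forallP => x; apply/card_le1_eqP => y z; rewrite !inE /= => /eqP cy /eqP cz.
  by move: cz; rewrite cy => -[].
have E3 : [forall x, forall y, ((x, y) \in Fset c) ==> ~~ connect (frel (Fset c)) y x]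
    = acycb c.
  apply: eq_forallb => x; apply: eq_forallb => y.
  by rewrite inE (eq_connect (frel_Fset c)).
by rewrite /is_scf E1 E2 E3.
Qed.

Lemma Fset_inj : injective Fset.
Proof.
move=> c d H; apply/ffunP => x; case cx: (c x) => [y|].
  have : (x, y) \in Fset c by rewrite inE cx.
  by rewrite H inE /= => /eqP ->.
case dx: (d x) => [y|] //.
have : (x, y) \in Fset d by rewrite inE dx.
by rewrite -H inE /= cx.
Qed.

Definition cF (F : {set 'I_n * 'I_n}) : {ffun 'I_n -> option 'I_n} :=
  [ffun x => [pick y | (x, y) \in F]].

Lemma Fset_cF e F : is_scf e F -> Fset (cF F) = F.
Proof.
case/and3P => _ /forallP deg _; apply/setP => -[x y]; rewrite inE /= ffunE.
case: pickP => [z xz|H]; last by rewrite H.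
apply/eqP/idP => [[<-]|xy] //; congr Some.
have := card_le1_eqP (deg x); apply; by rewrite inE.
Qed.

Lemma scforests_im e : scforests e = Fset @: [set c | allowed e c && acycb c].
Proof.
apply/setP => F; rewrite inE; apply/idP/imsetP.
  move=> sF; exists (cF F); last by rewrite (Fset_cF sF).
  by rewrite inE -is_scf_Fset (Fset_cF sF).
by case=> c; rewrite inE => Hc ->; rewrite is_scf_Fset.
Qed.

Lemma sum_scf (R : nmodType) e (G : {set 'I_n * 'I_n} -> R) :
  (\sum_(F in scforests e) G F = \sum_(c | allowed e c && acycb c) G (Fset c))%R.
Proof.
rewrite scforests_im big_imset /=; last by move=> c d _ _; apply: Fset_inj.
by apply: eq_bigl => c; rewrite inE.
Qed.

End Forest.

Local Open Scope ring_scope.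

Section Det.
Variable R : fieldType.
Variable n : nat.
Implicit Types (c : {ffun 'I_n -> option 'I_n}) (x y z a b : 'I_n).

Definition Nmx c : 'M[R]_n := \matrix_(x, y) (c x == Some y)%:R.

Lemma INmxE c x y : (1%:M - Nmx c) x y = (x == y)%:R - (c x == Some y)%:R.
Proof. by rewrite !mxE. Qed.

Lemma sum_delta (F : 'I_n -> R) x : \sum_y (x == y)%:R * F y = F x.
Proof.
rewrite (bigD1 x) //= eqxx mul1r big1 ?addr0 // => y yx.
by rewrite eq_sym (negbTE yx) mul0r.
Qed.

Lemma det_acyc c : acycb c -> \det (1%:M - Nmx c) = 1.
Proof.
move=> ac; rewrite /determinant (bigD1 1%g) //= [X in _ + X]big1 ?addr0.
  rewrite odd_perm1 expr0 mul1r; apply: big1 => x _; rewrite perm1 INmxE eqxx.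
  suff -> : (c x == Some x) = false by rewrite subr0.
  apply/negbTE/negP => cxx; move/forallP: ac => /(_ x) /forallP /(_ x).
  by rewrite cxx connect0.
move=> s s1.
have [x0 [sx0 cx0]] : exists x0, s x0 != x0 /\ c x0 != Some (s x0).
  suff : [exists x0, (s x0 != x0) && (c x0 != Some (s x0))].
    by case/existsP => x0 /andP [? ?]; exists x0.
  apply: contraT; rewrite negb_exists => /forallP H.
  have H' : forall x, s x != x -> c x = Some (s x).
    by move=> x sx; move: (H x); rewrite negb_and sx /= negbK => /eqP.
  have [x1 sx1] : exists x1, s x1 != x1.
    suff : [exists x1, s x1 != x1] by case/existsP => x1 ?; exists x1.
    apply: contraT; rewrite negb_exists => /forallP H2.
    suff : s = 1%g by move/eqP; rewrite (negbTE s1).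
    apply/permP => x; rewrite perm1.
    by move: (H2 x); rewrite negbK => /eqP.
  have hle : forall x, (hgt c (s x) <= hgt c x)%N.
    move=> x; have [sx|sx] := eqVneq (s x) x; first by rewrite sx.
    exact: ltnW (hgt_lt ac (H' x sx)).
  have hlt := hgt_lt ac (H' x1 sx1).
  have : (\sum_x hgt c (s x) < \sum_x hgt c x)%N.
    rewrite (bigD1 x1) //= [X in (_ < X)%N](bigD1 x1) //=.
    rewrite -addSn leq_add //; apply: leq_sum => x _; exact: hle.
  by rewrite [X in (_ < X)%N](reindex_inj (@perm_inj _ s)) /= ltnn.
rewrite (bigD1 x0) //= INmxE eq_sym (negbTE sx0) (negbTE cx0) subrr mul0r.
by rewrite mulr0.
Qed.

Definition uu c x := [forall z, connect (crel c) x z ==> (c z != None)].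

Lemma uu_step c a b : c a = Some b -> uu c a = uu c b.
Proof.
move=> cab; apply/idP/idP => /forallP H; apply/forallP => z; apply/implyP => con.
  apply: (implyP (H z)); apply: connect_trans con; apply: connect1.
  by rewrite /crel cab.
have [az|az] := eqVneq a z; first by rewrite -az cab.
exact: (implyP (H z)) (func_step cab con az).
Qed.

Lemma det_cyc c : ~~ acycb c -> \det (1%:M - Nmx c) = 0.
Proof.
move=> nac; rewrite -det_tr; apply/eqP/det0P.
pose u : 'cV[R]_n := \col_x (uu c x)%:R.
exists u^T.
  have [x [y [cxy cyx]]] : exists x y, c x = Some y /\ connect (crel c) y x.
    move: nac; rewrite negb_forall => /existsP [x]; rewrite negb_forall.
    case/existsP => y; rewrite negb_imply negbK => /andP [/eqP ? ?].
    by exists x, y.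
  have ux : uu c x.
    apply/forallP => z; apply/implyP => cxz.
    have czx := cycle_back cxy cyx cxz.
    apply/negP => /eqP cz; have := root_connect cz czx => zx.
    by move: cz; rewrite -zx cxy.
  apply/eqP => /matrixP /(_ 0 x); rewrite !mxE ux => /eqP; by rewrite oner_eq0.
rewrite -trmx_mul; apply/matrixP => j x; rewrite !mxE.
under eq_bigr do rewrite INmxE mulrBl.
rewrite sumrB !sum_delta !mxE.
case cx: (c x) => [b|].
  rewrite (eq_bigr (fun y => (b == y)%:R * (uu c y)%:R)); last by move=> y _; rewrite !mxE.
  by rewrite sum_delta (uu_step cx) subrr.
rewrite big1 ?subr0; last by move=> y _; rewrite (_ : (None == Some y) = false) // mul0r.
suff -> : uu c x = false by [].
apply/negbTE/negP => /forallP /(_ x); by rewrite connect0 cx.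
Qed.

Lemma det_N c : \det (1%:M - Nmx c) = (acycb c)%:R.
Proof.
by case: (boolP (acycb c)) => ac; [rewrite det_acyc | rewrite det_cyc].
Qed.

Definition Bm (o : option 'I_n) x y : R := (x == y)%:R - (o == Some y)%:R.

Lemma det_expand (w : 'I_n -> option 'I_n -> R) :
  \det (\matrix_(x, y) \sum_o w x o * Bm o x y) =
  \sum_(c : {ffun 'I_n -> option 'I_n}) (\prod_x w x (c x)) * (acycb c)%:R.
Proof.
under [RHS]eq_bigr do rewrite -det_N.
rewrite /determinant.
transitivity (\sum_(s : 'S_n) \sum_(c : {ffun 'I_n -> option 'I_n})
   (-1) ^+ s * ((\prod_x w x (c x)) * \prod_x Bm (c x) x (s x))).
  apply: eq_bigr => s _.
  rewrite (eq_bigr (fun x => \sum_o w x o * Bm o x (s x))); last by move=> x _; rewrite mxE.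
  rewrite bigA_distr_bigA mulr_sumr; apply: eq_bigr => c _; rewrite big_split.
  by [].
rewrite exchange_big; apply: eq_bigr => c _; rewrite mulr_sumr; apply: eq_bigr => s _.
rewrite mulrCA; congr (_ * (_ * _)); apply: eq_bigr => x _; by rewrite INmxE.
Qed.

End Det.

Lemma big_option (R : nmodType) (T : finType) (F : option T -> R) :
  \sum_(o : option T) F o = F None + \sum_(x : T) F (Some x).
Proof.
rewrite [LHS](bigID (fun o => o == None)) /= big_pred1_eq; congr (_ + _).
rewrite (reindex_omap Some (fun o => o)) //=; last by case.
by apply: eq_bigl => j; rewrite eqxx.
Qed.

Lemma prod_bool (R : comPzRingType) (I : finType) (P : pred I) (b : I -> bool) :
  \prod_(x | P x) (b x)%:R = [forall x, P x ==> b x]%:R :> R.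
Proof.
case: (boolP [forall x, P x ==> b x]) => [/forallP H|].
  by apply: big1 => x Px; rewrite (implyP (H x) Px).
rewrite negb_forall => /existsP [x]; rewrite negb_imply => /andP [Px bx].
by rewrite (bigD1 x) //= (negbTE bx) mul0r.
Qed.

Section Main.
Variables (R : realFieldType) (n : nat) (e : rel 'I_n).
Implicit Types (c : {ffun 'I_n -> option 'I_n}) (x y z a b i k : 'I_n).

Lemma big_optionI (F : option 'I_n -> R) :
  \sum_(o : option 'I_n) F o = F None + \sum_(x : 'I_n) F (@Some 'I_n x).
Proof. exact: big_option. Qed.

Definition allowed_at x (o : option 'I_n) := [forall y, (o == Some y) ==> e x y].

Lemma allowed_atS x z : allowed_at x (Some z) = e x z.
Proof.
apply/forallP/idP => [/(_ z)|exz y]; first by rewrite eqxx.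
by apply/implyP => /eqP [<-].
Qed.

Lemma allowed_atN x : allowed_at x None.
Proof. by apply/forallP. Qed.

Definition MM : 'M[R]_n := 1%:M + laplacian R e.

Lemma outdegE x : (outdeg e x)%:R = \sum_z (e x z)%:R :> R.
Proof.
rewrite /outdeg -sum1_card big_mkcond natr_sum; apply: eq_bigr => z _.
by rewrite inE; case: (e x z).
Qed.

Lemma row_expand x y (F : option 'I_n -> bool) :
  \sum_o (F o)%:R * Bm R o x y =
  (F None)%:R * (x == y)%:R + (x == y)%:R * \sum_z (F (Some z))%:R
    - \sum_z (F (Some z))%:R * (z == y)%:R.
Proof.
rewrite big_option /Bm (_ : (None == Some y) = false) // subr0 -addrA; congr (_ + _).
rewrite mulr_sumr -sumrB; apply: eq_bigr => z _.
by rewrite mulrBr mulrC.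
Qed.

Lemma sum_delta' (F : 'I_n -> R) y : \sum_z F z * (z == y)%:R = F y.
Proof.
rewrite (bigD1 y) //= eqxx mulr1 big1 ?addr0 // => z zy.
by rewrite (negbTE zy) mulr0.
Qed.

Lemma MM_expand : MM = \matrix_(x, y) \sum_o (allowed_at x o)%:R * Bm R o x y.
Proof.
apply/matrixP => x y; rewrite !mxE row_expand allowed_atN mul1r.
rewrite [\sum_z (allowed_at x (Some z))%:R](eq_bigr (fun z => (e x z)%:R)); last by move=> z _; exact: (congr1 (fun b : bool => b%:R) (allowed_atS x z)).
rewrite [\sum_z (allowed_at x (Some z))%:R * (z == y)%:R](eq_bigr (fun z => (e x z)%:R * (z == y)%:R)); last first.
  by move=> z _; congr (_ * _); exact: (congr1 (fun b : bool => b%:R) (allowed_atS x z)).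
by rewrite sum_delta' -outdegE addrA.
Qed.

Lemma card_sum (T : finType) (A : {set T}) : #|A|%:R = \sum_(x in A) 1 :> R.
Proof. by rewrite sumr_const. Qed.

Lemma sum_setP (T : finType) (A : {set T}) (P : pred T) :
  \sum_(x in [set F in A | P F]) (1 : R) = \sum_(x in A) (P x)%:R.
Proof.
rewrite big_mkcond [RHS]big_mkcond; apply: eq_bigr => x _; rewrite !inE.
by case: (x \in A); case: (P x).
Qed.

Lemma detMM : \det MM = #|scforests e|%:R.
Proof.
rewrite MM_expand det_expand card_sum sum_scf [RHS]big_mkcond /=.
apply: eq_bigr => c _; rewrite prod_bool.
rewrite (_ : [forall x, true ==> allowed_at x (c x)] = allowed e c) //.
by case: (allowed e c); case: (acycb c); rewrite ?mulr1 ?mulr0 ?mul0r.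
Qed.


Definition Mk k i : 'M[R]_n := \matrix_(x, y) if x == k then (y == i)%:R else MM x y.

Lemma cof_Mk k i : cofactor MM k i = \det (Mk k i).
Proof.
rewrite (expand_det_row _ k) (bigD1 i) //= big1 ?addr0; last first.
  by move=> j ji; rewrite mxE eqxx (negbTE ji) mul0r.
rewrite mxE !eqxx mul1r /cofactor; congr (_ * \det _); apply/matrixP => a b.
by rewrite !mxE (_ : (lift k a == k) = false) //; apply/negbTE; rewrite eq_sym neq_lift.
Qed.

Definition wk k i x (o : option 'I_n) : R :=
  if x == k then (o == None)%:R - (o == Some i)%:R else (allowed_at x o)%:R.

Lemma Mk_expand k i : Mk k i = \matrix_(x, y) \sum_o wk k i x o * Bm R o x y.
Proof.
apply/matrixP => x y; rewrite [LHS]mxE [RHS]mxE /wk; case: eqP => [->|xk]; last first.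
  by rewrite MM_expand mxE.
rewrite big_optionI (_ : (None == Some i) = false) // subr0 mul1r.
rewrite (bigD1 i) //= big1 ?addr0; last first.
  move=> z zi /=; rewrite (_ : (Some z == Some i) = false) ?subrr ?mul0r //.
  by apply/eqP => -[]; apply/eqP.
rewrite /= eqxx.
rewrite /Bm (_ : (None == Some y) = false) // (_ : (Some i == Some y) = (i == y)) //.
by rewrite sub0r mulN1r subr0 opprB addrC subrK eq_sym.
Qed.


Definition swp i (o : option 'I_n) : option 'I_n :=
  if o == None then Some i else if o == Some i then None else o.

Lemma swpK i : involutive (swp i).
Proof.
rewrite /swp => -[z|] /=; last by rewrite eqxx.
case: (eqVneq z i) => [->|zi]; first by rewrite eqxx.
rewrite (_ : (Some z == Some i) = false) /=; last by apply/eqP => -[]; apply/eqP.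
by rewrite (_ : (Some z == Some i) = false) //; apply/eqP => -[]; apply/eqP.
Qed.

Definition tau k i c := upd c k (swp i (c k)).

Lemma tauK k i : involutive (tau k i).
Proof.
move=> c; apply/ffunP => x; rewrite /tau /upd !ffunE eqxx swpK.
by case: eqP => [->|].
Qed.

Definition Wk k c := [forall x, (x != k) ==> allowed_at x (c x)].

Lemma Wk_tau k i c : Wk k (tau k i c) = Wk k c.
Proof.
apply: eq_forallb => x; rewrite /tau /upd ffunE.
by case: eqP.
Qed.

Lemma Wk_allowed k c : c k = None -> Wk k c = allowed e c.
Proof.
move=> ck; apply/forallP/forallP => H x.
  case: (eqVneq x k) => [->|xk]; first by rewrite ck; apply: allowed_atN.
  exact: (implyP (H x) xk).
by apply/implyP => _; apply: H.
Qed.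

Lemma cofMM k i : cofactor MM k i = #|[set F in scforests e | froot F i == k]|%:R.
Proof.
rewrite cof_Mk Mk_expand det_expand.
transitivity (\sum_(c : {ffun 'I_n -> option 'I_n}) (((c k == None) && allowed e c && acycb c &&
                       connect (crel c) i k) : bool)%:R : R); last first.
  rewrite card_sum sum_setP sum_scf [RHS]big_mkcond /=.
  apply: eq_bigr => c _.
  case: (boolP (allowed e c && acycb c)) => [/andP [al ac]|]; last first.
    by case: (allowed e c); case: (acycb c); rewrite ?andbF.
  by rewrite froot_eq // al ac; case: (c k == None).
transitivity (\sum_(c : {ffun 'I_n -> option 'I_n}) (((c k == None)%:R - (c k == Some i)%:R) * (Wk k c)%:R
                       * (acycb c)%:R : R)).
  apply: eq_bigr => c _; congr (_ * _); rewrite (bigD1 k) //= /wk eqxx.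
  congr (_ * _); rewrite /Wk -prod_bool; apply: eq_bigr => x xk.
  by rewrite (negbTE xk).
under eq_bigr do rewrite -mulrA mulrBl.
rewrite sumrB [X in _ - X](reindex_inj (can_inj (tauK k i))) -sumrB.
apply: eq_bigr => c _; rewrite Wk_tau.
rewrite {2}/tau /upd ffunE eqxx.
case ck: (c k) => [z|] /=.
  have -> : (swp i (Some z) == Some i) = false.
    by rewrite /swp /=; case: ifP.
  by rewrite !mul0r subrr.
rewrite (_ : swp i None = Some i) // eqxx !mul1r.
rewrite (_ : [ffun x => if x == k then Some i else c x] = upd c k (Some i)) //.
rewrite acyc_upd // Wk_allowed //.
case: (allowed e c); case: (acycb c); case: (connect _ i k);
  by rewrite /= ?mul0r ?mul1r ?mulr0 ?mulr1 ?subrr ?subr0.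
Qed.

End Main.

Section Fin.
Variables (R : realFieldType) (n : nat) (e : rel 'I_n).

Lemma scf_gt0 : (0 < #|scforests e|)%N.
Proof.
apply/card_gt0P; exists (Fset [ffun _ => None]).
rewrite inE is_scf_Fset; apply/andP; split; apply/forallP => x; apply/forallP => y;
  by rewrite ffunE.
Qed.

Lemma MM_unit : MM R e \in unitmx.
Proof.
by rewrite unitmxE unitfE detMM pnatr_eq0 -lt0n scf_gt0.
Qed.

Lemma omegaE i k : forest_matrix R e i k =
  #|[set F in scforests e | froot F i == k]|%:R / #|scforests e|%:R.
Proof.
rewrite /forest_matrix -/(MM R e) /invmx MM_unit !mxE -cofMM detMM.
by rewrite mulrC.
Qed.

End Fin.


Unset Implicit Arguments.

Theorem lemma4p3 (R : realFieldType) (n : nat) (e : rel 'I_n) (i : 'I_n) :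
  simple_digraph e ->
  let omega := forest_matrix R e in
  let d := (outdeg e i)%:R : R in
  [/\ unif_exp e (omega_bar R e i) = omega i i,
      unif_var e (omega_bar R e i) =
        3 * omega i i / (1 + d) - 2 / (1 + d) ^+ 2 - omega i i ^+ 2 &
      unif_var e (omega_bar R e i) <= unif_var e (omega_hat R i i)].
Proof.
move=> _ omega d.
set f : R := #|scforests e|%:R.
have fgt0 : 0 < f by rewrite ltr0n scf_gt0.
have f0 : f != 0 by rewrite gt_eqF.
pose fk k : R := #|[set F in scforests e | froot F i == k]|%:R.
have om k : omega i k = fk k / f by rewrite /omega omegaE.
set N := in_nbrs e i.
pose X F : R := (froot F i \in N)%:R.
have XE F : \sum_(k in N) omega_hat R i k F = X F.
  rewrite /X /omega_hat; case: (boolP (froot F i \in N)) => rN.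
    rewrite (bigD1 (froot F i)) //= eqxx big1 ?addr0 // => k /andP [_ kr].
    by rewrite eq_sym (negbTE kr).
  by rewrite big1 // => k kN; case: eqP => // ek; move: rN; rewrite ek kN.
set S : R := \sum_(k in N) fk k.
have sumX : \sum_(F in scforests e) X F = S.
  rewrite /S; under eq_bigr do rewrite -XE.
  rewrite exchange_big /=; apply: eq_bigr => k _.
  by rewrite /fk card_sum sum_setP.
have sumL a b : \sum_(F in scforests e) (a + b * X F) = a * f + b * S.
  by rewrite big_split /= -mulr_sumr sumX sumr_const /f mulr_natr.
have Xb F : X F * X F = X F by rewrite /X; case: (_ \in _); rewrite ?mulr0 ?mulr1.
have X01 F : 0 <= X F <= 1 by rewrite /X; case: (_ \in _); rewrite /= ?ler01 ?lexx.
have key : omega i i * (1 + d) - S / f = 1.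
  have /matrixP /(_ i i) := mulVmx (MM_unit R e).
  rewrite [X in X = _ -> _]mxE [X in _ = X -> _]mxE eqxx /= => H2.
  apply: (etrans _ H2); rewrite (eq_bigr (fun k => omega i k * (k == i)%:R
     + omega i k * (outdeg e k)%:R * (k == i)%:R - omega i k * (e k i)%:R)); last first.
    move=> k _; rewrite /MM !mxE; change (invmx (1%:M + laplacian R e) i k) with (omega i k); ring.
  rewrite !sumrB big_split /= !sum_delta' mulrDr mulr1 -/d.
  congr (_ - _); rewrite /S mulr_suml [RHS]big_mkcond /=.
  rewrite big_mkcond /=; apply: eq_bigr => k _; rewrite -om /N inE.
  by case: (e k i); rewrite ?mulr1 ?mulr0.
set m := omega i i in key *.
set c := 1 + d in key *.
have cge1 : 1 <= c by rewrite /c lerDl ler0n.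
have c0 : c != 0 by rewrite gt_eqF // (lt_le_trans ltr01 cge1).
set q := S / f in key.
have SE : S = q * f by rewrite /q mulrVK ?unitfE.
have mE : m = (1 + q) / c.
  by apply: (canRL (mulfK c0)); rewrite -key subrK.
have q0 : 0 <= q.
  rewrite /q divr_ge0 ?(ltW fgt0) // -sumX; apply: sumr_ge0 => F _.
  by case/andP: (X01 F).
have q1 : q <= 1.
  rewrite /q ler_pdivrMr // mul1r -sumX /f card_sum; apply: ler_sum => F _.
  by case/andP: (X01 F).
have m1 : m <= 1.
  rewrite /m om ler_pdivrMr // mul1r /fk /f ler_nat subset_leq_card //.
  by apply/subsetP => F; rewrite inE => /andP [].
have Eb : unif_exp e (omega_bar R e i) = m.
  rewrite /unif_exp /omega_bar -/d -/c -/f.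
  rewrite (eq_bigr (fun F => c^-1 + c^-1 * X F)); last first.
    by move=> F _; rewrite XE mulrDr mulr1.
  rewrite sumL SE mE; field; apply/andP; split => //.
have Vb : unif_var e (omega_bar R e i) = 3 * m / c - 2 / c ^+ 2 - m ^+ 2.
  rewrite /unif_var Eb /unif_exp /omega_bar -/d -/c -/f.
  rewrite (eq_bigr (fun F => (c^-1 - m) ^+ 2 + (2 * c^-1 * (c^-1 - m) + c^-1 ^+ 2) * X F)); last first.
    move=> F _; rewrite XE.
    have -> : (c^-1 * (1 + X F) - m) ^+ 2 = (c^-1 - m)^+2 +
       2 * c^-1 * (c^-1 - m) * X F + c^-1 ^+ 2 * (X F * X F) by ring.
    by rewrite Xb; ring.
  rewrite sumL SE mE; field; apply/andP; split => //.
pose Y F : R := omega_hat R i i F.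
have sumY : \sum_(F in scforests e) Y F = fk i by rewrite /fk card_sum sum_setP.
have Yb F : Y F * Y F = Y F by rewrite /Y /omega_hat; case: (_ == _); rewrite ?mulr0 ?mulr1.
have sumLY a b : \sum_(F in scforests e) (a + b * Y F) = a * f + b * fk i.
  by rewrite big_split /= -mulr_sumr sumY sumr_const /f mulr_natr.
have fkE : fk i = m * f by rewrite /m om mulfVK.
have Eh : unif_exp e (omega_hat R i i) = m.
  rewrite /unif_exp (eq_bigr (fun F => 0 + 1 * Y F)); last by move=> F _; rewrite add0r mul1r.
  by rewrite sumLY fkE mul0r add0r mul1r mulrC mulfK.
have Vh : unif_var e (omega_hat R i i) = m ^+ 2 + (1 - 2 * m) * m.
  rewrite /unif_var Eh /unif_exp.
  rewrite (eq_bigr (fun F => m ^+ 2 + (1 - 2 * m) * Y F)); last first.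
    move=> F _; rewrite -/(Y F).
    have -> : (Y F - m) ^+ 2 = m ^+ 2 - 2 * m * Y F + Y F * Y F by ring.
    by rewrite Yb; ring.
  rewrite -/f sumLY fkE; field; exact: f0.
split; [exact: Eb | exact: Vb |].
rewrite Vb Vh -subr_ge0.
have num : 0 <= (1 + q) * (c - 3) + 2.
  have [d0|dpos] := eqVneq (outdeg e i) 0%N.
    have c1 : c = 1 by rewrite /c /d d0 addr0.
    nra.
  have c2 : 2 <= c.
    rewrite /c /d (_ : 2 = 1 + 1) // lerD2l ler1n lt0n //.
  nra.
have -> : m ^+ 2 + (1 - 2 * m) * m - (3 * m / c - 2 / c ^+ 2 - m ^+ 2) =
    ((1 + q) * (c - 3) + 2) / c ^+ 2.
  rewrite mE; field.
  exact: c0.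
by rewrite divr_ge0 // sqr_ge0.
Qed.
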